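(* A random permutation $\Pi$ with values in $S_n$ is bi-decomposable if and only if for all pairs of consecutive partitions $\underline{\kappa}=(\underline{\kappa}_1,\ldots,\underline{\kappa}_s)$ and $\underline{\lambda}=(\underline{\lambda}_1,\ldots,\underline{\lambda}_t)$ of $\{1,\ldots,n\}$, the random variables $\Pi_{\underline{\kappa}_i\times\underline{\lambda}_j}$, $1\le i\le s$, $1\le j\le t$, are conditionally independent given the pair $(\{\Pi_{\underline{\kappa}}\},\{\Pi^{-1}_{\underline{\lambda}}\})$.
   Context: $S_n$ is the group of permutations of $\{1,\ldots,n\}$; $\Pi$ is a random element of $S_n$. For a vector $v$, $v\{i:j\}=\{v(i),\ldots,v(j)\}$ and $v(i:j)=(v(i),\ldots,v(j))$. $\Pi$ is called $L$-decomposable if for every $2\le k\le n-2$ and $\pi\in S_n$, $P(\Pi(k+1)=\pi(k+1)\mid \Pi(1:k)=\pi(1:k)) = P(\Pi(k+1)=\pi(k+1)\mid \Pi\{1:k\}=\pi\{1:k\})$ whenever the left side is defined. $\Pi$ is bi-decomposable if both $\Pi$ and $\Pi^{-1}$ are $L$-decomposable. A consecutive partition is given by $0=\kappa_0<\kappa_1<\cdots<\kappa_{s}=n$ with blocks $\underline{\kappa}_i=\{\kappa_{i-1}+1,\ldots,\kappa_i\}$; for $\pi\in S_n$, $\{\pi_{\underline{\kappa}}\}=(\pi\{\kappa_{i-1}+1:\kappa_i\})_{i=1}^{s}$ is the vector of unordered marginals (and similarly $\{\pi^{-1}_{\underline{\lambda}}\}$ for $\pi^{-1}$). For $\pi\in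 S_n$, $\pi_{\underline{\kappa}_i\times\underline{\lambda}_j}=\{(a,\pi(a)): a\in\underline{\kappa}_i,\ \pi(a)\in\underline{\lambda}_j\}$. *)

(* Defs.v *)
(* Permutations of {1,...,n} are modelled as {perm 'I_n}
   (0-based indices). A random permutation is a probability mass function
   p : {perm 'I_n} -> R over a real field R. *)
From HB Require Import structures.
From mathcomp Require Import all_boot all_order all_algebra all_fingroup.
Set Implicit Arguments. Unset Strict Implicit. Unset Printing Implicit Defensive.
Import Order.TTheory GRing.Theory Num.Theory.
Local Open Scope ring_scope.

Section Defs.
Variables (R : realFieldType) (n : nat).
Implicit Types (p : {perm 'I_n} -> R) (E : pred {perm 'I_n}).

Definition Pr p E : R := \sum_(s : {perm 'I_n} | E s) p s.

Definition is_distr p : Prop := (forall s, 0 <= p s) /\ \sum_s p s = 1.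

Definition pinv p : {perm 'I_n} -> R := fun s => p s^-1%g.

(* Index k (as a nat) with 2 <= k <= n-2: the prefix
   Pi(1:k) is the values at 0-based indices a < k, Pi(k+1) is the value at
   0-based index k. The left conditional probability is defined iff
   P(Pi(1:k) = pi(1:k)) > 0. *)
Definition L_decomposable p : Prop :=
  forall (k : 'I_n) (pi : {perm 'I_n}), (2 <= k)%N -> (k <= n - 2)%N ->
  let A := [pred s : {perm 'I_n} | s k == pi k] in
  let B := [pred s : {perm 'I_n} | [forall a : 'I_n, (a < k)%N ==> (s a == pi a)]] in
  let C := [pred s : {perm 'I_n} |
              [set s a | a : 'I_n & (a < k)%N] == [set pi a | a : 'I_n & (a < k)%N]] in
  0 < Pr p B ->
  Pr p [predI A & B] / Pr p B = Pr p [predI A & C] / Pr p C.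

Definition bi_decomposable p : Prop := L_decomposable p /\ L_decomposable (pinv p).

Definition consec_part (s : nat) (kap : nat -> nat) : Prop :=
  kap 0%N = 0%N /\ kap s = n /\ forall i : 'I_s, (kap i < kap i.+1)%N.

Definition block (kap : nat -> nat) (i : nat) : {set 'I_n} :=
  [set a : 'I_n | (kap i <= a < kap i.+1)%N].

Definition graph_block (kap lam : nat -> nat) (i j : nat) (s : {perm 'I_n})
  : {set 'I_n * 'I_n} :=
  [set x : 'I_n * 'I_n | [&& x.1 \in block kap i, x.2 \in block lam j & s x.1 == x.2]].

Definition cond_indep_blocks p (s : nat) (kap : nat -> nat) (t : nat) (lam : nat -> nat)
  : Prop :=
  forall (y1 : 'I_s -> {set 'I_n}) (y2 : 'I_t -> {set 'I_n})
         (x : 'I_s -> 'I_t -> {set 'I_n * 'I_n}),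
  let EY := [pred g : {perm 'I_n} |
               [forall i : 'I_s, g @: block kap i == y1 i] &&
               [forall j : 'I_t, g^-1%g @: block lam j == y2 j]] in
  let EX := [pred g : {perm 'I_n} |
               [forall i : 'I_s, forall j : 'I_t, graph_block kap lam i j g == x i j]] in
  0 < Pr p EY ->
  Pr p [predI EX & EY] / Pr p EY =
  \prod_(i : 'I_s) \prod_(j : 'I_t)
     (Pr p [predI [pred g | graph_block kap lam i j g == x i j] & EY] / Pr p EY).

End Defs.

(* Main.v *)
Require Import Defs.
From HB Require Import structures.
From mathcomp Require Import all_boot all_order all_algebra all_fingroup.
Set Implicit Arguments. Unset Strict Implicit. Unset Printing Implicit Defensive.
Import Order.TTheory GRing.Theory Num.Theory.
Local Open Scope ring_scope.

Section S.
Variables (R : realFieldType) (n : nat).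
Implicit Types (p : {perm 'I_n} -> R) (g h : {perm 'I_n}).

Lemma PrE p (E : pred {perm 'I_n}) : Pr p E = \sum_g (if E g then p g else 0).
Proof. by rewrite /Pr big_mkcond. Qed.

Lemma Pr_ext p (E1 E2 : pred {perm 'I_n}) : E1 =1 E2 -> Pr p E1 = Pr p E2.
Proof. by move=> H; rewrite /Pr; apply: eq_bigl. Qed.

Lemma Pr_ge0 p (E : pred {perm 'I_n}) : (forall g, 0 <= p g) -> 0 <= Pr p E.
Proof. by move=> H; rewrite /Pr; apply: sumr_ge0. Qed.

Lemma Pr_sub p (E1 E2 : pred {perm 'I_n}) : (forall g, 0 <= p g) ->
  (forall g, E1 g -> E2 g) -> Pr p E1 <= Pr p E2.
Proof.
move=> H HE; rewrite !PrE; apply: ler_sum => g _.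
case E1g: (E1 g); first by rewrite (HE _ E1g).
by case: (E2 g).
Qed.

Definition mixf g h (k : nat) : 'I_n -> 'I_n := fun a => if (a < k)%N then g a else h a.
Definition mix g h k : {perm 'I_n} :=
  match injectiveP (mixf g h k) with ReflectT H => perm H | ReflectF _ => g end.
Lemma mixE g h k : injective (mixf g h k) -> forall a, mix g h k a = mixf g h k a.
Proof. rewrite /mix; case: injectiveP => // H _ a; by rewrite permE. Qed.

Definition Hset g h (k : nat) := forall a : 'I_n, (a < k)%N -> exists2 a' : 'I_n, (a' < k)%N & h a' = g a.

Lemma mixf_inj g h k : Hset g h k -> injective (mixf g h k).
Proof.
move=> H a1 a2; rewrite /mixf.
case: ifP => l1; case: ifP => l2.
- by move/perm_inj.
- move=> e. have [a' la' e'] := H a1 l1. rewrite -e' in e. move/perm_inj: e => e.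
  by move: l2; rewrite -e la'.
- move=> e. have [a' la' e'] := H a2 l2. rewrite -e' in e. move/perm_inj: e => e.
  by move: l1; rewrite e la'.
- by move/perm_inj.
Qed.

Lemma mix_lt g h k (a : 'I_n) : Hset g h k -> (a < k)%N -> mix g h k a = g a.
Proof. move=> H l; rewrite mixE; last exact: mixf_inj. by rewrite /mixf l. Qed.
Lemma mix_ge g h k (a : 'I_n) : Hset g h k -> (k <= a)%N -> mix g h k a = h a.
Proof. move=> H l; rewrite mixE; last exact: mixf_inj. by rewrite /mixf ltnNge l. Qed.


Lemma nat_last (m N : nat) : (m < N)%N -> (N.-1 <= m)%N -> m = N.-1.
Proof. by case: N => //= N; rewrite ltnS => h1 h2; apply/eqP; rewrite eqn_leq h1 h2. Qed.

Lemma last_det g h : (forall a : 'I_n, (a < n.-1)%N -> g a = h a) -> g = h.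
Proof.
move=> H; apply/permP => a.
case: (ltnP a n.-1) => la; first exact: H.
set b := (h^-1)%g (g a).
have hb : h b = g a by rewrite /b permKV.
case: (ltnP b n.-1) => lb.
  have e : g b = g a by rewrite H.
  move/perm_inj: e => e. by move: lb; rewrite e ltnNge la.
have eab : b = a.
  by apply/val_inj => /=; rewrite (nat_last (ltn_ord a) la) (nat_last (ltn_ord b) lb).
by rewrite -hb eab.
Qed.

Definition Q p (m : nat) g := Pr p [pred s : {perm 'I_n} | [forall a : 'I_n, (a < m)%N ==> (s a == g a)]].
Definition G p (k : 'I_n) (pi : {perm 'I_n}) :=
  Pr p [predI [pred s : {perm 'I_n} | s k == pi k] & [pred s : {perm 'I_n} | [set s a | a : 'I_n & (a < k)%N] == [set pi a | a : 'I_n & (a < k)%N]]]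
  / Pr p [pred s : {perm 'I_n} | [set s a | a : 'I_n & (a < k)%N] == [set pi a | a : 'I_n & (a < k)%N]].
Definition Gn p (m : nat) g := if insub m is Some k then G p k g else 1.

Lemma GnE p (k : 'I_n) g : Gn p k g = G p k g.
Proof. by rewrite /Gn valK. Qed.

Lemma Q_step p (k : 'I_n) g : (forall s, 0 <= p s) -> L_decomposable p -> (2 <= k)%N -> (k <= n - 2)%N ->
  Q p k.+1 g = Q p k g * G p k g.
Proof.
move=> p0 Ld h2 h3.
have H := Ld k g h2 h3. cbv zeta in H.
rewrite /G /Q.
set B := [pred s : {perm 'I_n} | [forall a : 'I_n, (a < k)%N ==> (s a == g a)]].
set A := [pred s : {perm 'I_n} | s k == g k].
have -> : Pr p [pred s : {perm 'I_n} | [forall a : 'I_n, (a < k.+1)%N ==> (s a == g a)]] = Pr p [predI A & B].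
  apply: Pr_ext => s /=.
  apply/forallP/andP => [Hs|[Hk /forallP Hs] a].
    split; first by apply: (implyP (Hs k)).
    by apply/forallP => a; apply/implyP => la; apply: (implyP (Hs a)); apply: ltnW.
  apply/implyP; rewrite ltnS leq_eqVlt => /orP [/eqP e|la]; last exact: (implyP (Hs a)).
  by have -> : a = k by apply: val_inj.
have PB0 : 0 <= Pr p B by apply: Pr_ge0.
case: (boolP (0 < Pr p B)) => [pos|npos].
  by rewrite -(H pos) mulrC divfK // gt_eqF.
have eB : Pr p B = 0 by apply/eqP; rewrite eq_le PB0 andbT leNgt.
rewrite eB mul0r; apply/eqP; rewrite eq_le Pr_ge0 // andbT -eB.
by apply: Pr_sub => // s /andP [].
Qed.

Lemma natA (M N : nat) : (M.+1 <= N.-1)%N -> (M <= N - 2)%N /\ (M < N)%N.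
Proof.
case: N => [|[|N]] //= h; split; first by rewrite -addn2 addnK -ltnS.
by rewrite (ltn_trans h).
Qed.

Lemma Q_fact p g : (forall s, 0 <= p s) -> L_decomposable p -> forall M,
  (2 <= M)%N -> (M <= n.-1)%N -> Q p M g = Q p 2 g * \prod_(2 <= m < M) Gn p m g.
Proof.
move=> p0 Ld; elim => [//|M IH] h2 hM.
case: (ltnP M 2) => hM2.
  have -> : M.+1 = 2 by apply/eqP; rewrite eqn_leq h2 andbT.
  by rewrite big_geq // mulr1.
have [hMn2 hMn] := natA hM.
pose k := Ordinal hMn; have vk : M = k by [].
rewrite vk in IH hM2 hMn2 hM *.
rewrite (@Q_step p k g) //.
rewrite [X in _ = _ * X]big_nat_recr; last by [].
rewrite IH; [|by []|by apply: ltnW].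
rewrite GnE /=; exact: esym (mulrA _ _ _).
Qed.

Lemma Q_last p g : Q p n.-1 g = p g.
Proof.
rewrite /Q /Pr (eq_bigl (fun s => s == g)); first exact: big_pred1_eq.
move=> s /=.
apply/forallP/eqP => [H|->]; last by move=> a; rewrite eqxx implybT.
by apply: last_det => a la; apply/eqP; apply: (implyP (H a)).
Qed.

Definition PP p g lo hi := \prod_(lo <= m < hi) Gn p m g.

Lemma p_fact p g k : (forall s, 0 <= p s) -> L_decomposable p -> (2 <= k)%N -> (k <= n.-1)%N ->
  p g = Q p 2 g * (PP p g 2 k * PP p g k n.-1).
Proof.
move=> p0 Ld h2 hk.
have h3 : (2 <= n.-1)%N by apply: leq_trans hk.
rewrite -Q_last (Q_fact g p0 Ld h3 (leqnn _)) /PP.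
congr (_ * _); exact: big_cat_nat.
Qed.

Lemma PP_ext p g h lo hi : (forall m, (lo <= m)%N -> (m < hi)%N -> Gn p m g = Gn p m h) ->
  PP p g lo hi = PP p h lo hi.
Proof. move=> H; apply: eq_big_nat => m /andP [h1 h2]; exact: H. Qed.

Lemma Q_ext p m g h : (forall a : 'I_n, (a < m)%N -> g a = h a) -> Q p m g = Q p m h.
Proof.
move=> H; apply: Pr_ext => s /=; apply: eq_forallb => a.
by case: (ltnP a m) => // la; rewrite H.
Qed.

Lemma Gn_ext p m g h : (forall k : 'I_n, val k = m ->
  g k = h k /\ [set g a | a : 'I_n & (a < k)%N] = [set h a | a : 'I_n & (a < k)%N]) ->
  Gn p m g = Gn p m h.
Proof.
move=> H; rewrite /Gn; case: insubP => [k _ vk|]; last by [].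
by have [e1 e2] := H k vk; rewrite /G e1 e2.
Qed.

Lemma set_mix_lt g h k (m : nat) : Hset g h k -> (m <= k)%N ->
  [set mix g h k a | a : 'I_n & (a < m)%N] = [set g a | a : 'I_n & (a < m)%N].
Proof.
move=> H hm; apply: eq_in_imset => a; rewrite inE => la.
by rewrite mix_lt // (leq_trans la).
Qed.

Lemma set_mix_ge g h k (m : nat) : Hset g h k -> Hset h g k -> (k <= m)%N ->
  [set mix g h k a | a : 'I_n & (a < m)%N] = [set h a | a : 'I_n & (a < m)%N].
Proof.
move=> H1 H2 hm; apply/setP => b; apply/imsetP/imsetP => [[a la ->]|[a la ->]];
  rewrite inE in la.
  case: (ltnP a k) => lk.
    have [a' la' e] := H1 a lk.
    by exists a'; rewrite ?inE ?(leq_trans la') // mix_lt.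
  by exists a; rewrite ?inE // mix_ge.
case: (ltnP a k) => lk.
  have [a' la' e] := H2 a lk.
  by exists a'; rewrite ?inE ?(leq_trans la') // mix_lt.
by exists a; rewrite ?inE // mix_ge.
Qed.

Lemma ar (a b c d e f : R) : (a*(b*c))*(d*(e*f)) = (a*(b*f))*(d*(e*c)).
Proof.
rewrite mulrACA [RHS]mulrACA; congr (_ * _).
rewrite mulrACA [RHS]mulrACA; congr (_ * _); exact: mulrC.
Qed.

Lemma Ek p g h k : (forall s, 0 <= p s) -> L_decomposable p -> Hset g h k -> Hset h g k ->
  p g * p h = p (mix g h k) * p (mix h g k).
Proof.
move=> p0 Ld H1 H2.
case: (leqP k 1) => hk1.
  have E (u v : {perm 'I_n}) : Hset u v k -> mix u v k = v.
    move=> Hu; apply/permP => a; case: (ltnP a k) => la; last by rewrite mix_ge.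
    rewrite mix_lt //; have [a' la' e] := Hu a la; rewrite -e; congr (v _).
    apply/val_inj => /=.
    have := leq_trans la hk1; rewrite ltnS leqn0 => /eqP ->.
    by have := leq_trans la' hk1; rewrite ltnS leqn0 => /eqP ->.
  by rewrite (E _ _ H1) (E _ _ H2) mulrC.
case: (leqP n.-1 k) => hkn.
  have E (u v : {perm 'I_n}) : Hset u v k -> mix u v k = u.
    by move=> Hu; apply: last_det => a la; rewrite mix_lt // (leq_trans la).
  by rewrite (E _ _ H1) (E _ _ H2).
have hkn' := ltnW hkn.
rewrite (p_fact g p0 Ld hk1 hkn') (p_fact h p0 Ld hk1 hkn').
rewrite (p_fact (mix g h k) p0 Ld hk1 hkn') (p_fact (mix h g k) p0 Ld hk1 hkn').
rewrite (@Q_ext p 2 (mix g h k) g); last by move=> a la; rewrite mix_lt // (leq_trans la hk1).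
rewrite (@Q_ext p 2 (mix h g k) h); last by move=> a la; rewrite mix_lt // (leq_trans la hk1).
rewrite (@PP_ext p (mix g h k) g 2 k); last first.
  move=> m _ lm; apply: Gn_ext => k' vk; subst m; split; first by rewrite mix_lt.
  by rewrite set_mix_lt // ltnW.
rewrite (@PP_ext p (mix g h k) h k n.-1); last first.
  move=> m lm _; apply: Gn_ext => k' vk; subst m; split; first by rewrite mix_ge.
  by rewrite set_mix_ge.
rewrite (@PP_ext p (mix h g k) h 2 k); last first.
  move=> m _ lm; apply: Gn_ext => k' vk; subst m; split; first by rewrite mix_lt.
  by rewrite set_mix_lt // ltnW.
rewrite (@PP_ext p (mix h g k) g k n.-1); last first.
  move=> m lm _; apply: Gn_ext => k' vk; subst m; split; first by rewrite mix_ge.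
  by rewrite set_mix_ge.
exact: ar.
Qed.

Lemma imset_inv g (B : {set 'I_n}) : (g^-1)%g @: B = [set a | g a \in B].
Proof.
apply/setP => a; rewrite inE; apply/imsetP/idP => [[b hb ->]|h]; first by rewrite permKV.
by exists (g a); rewrite ?permK.
Qed.

Definition EYf s (kap : nat -> nat) t (lam : nat -> nat) (y1 : 'I_s -> {set 'I_n}) (y2 : 'I_t -> {set 'I_n}) : simpl_pred {perm 'I_n} :=
  [pred g : {perm 'I_n} | [forall i : 'I_s, g @: block n kap i == y1 i] &&
            [forall j : 'I_t, (g^-1)%g @: block n lam j == y2 j]].

Lemma kap_mono s kap : consec_part n s kap -> forall i j, (i <= j)%N -> (j <= s)%N -> (kap i <= kap j)%N.
Proof.
move=> [h0 [hs hk]] i j hij; elim: j hij => [|j IH] hij hjs.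
  by rewrite leqn0 in hij; rewrite (eqP hij).
case: (ltnP i j.+1) hij => [lij|]; last by move=> h1 h2; rewrite (@anti_leq i j.+1) ?h1 ?h2.
move=> _; rewrite ltnS in lij.
by apply: (leq_trans (IH lij (ltnW hjs))); apply: ltnW; apply: (hk (Ordinal hjs)).
Qed.

Lemma in_block kap i (a : 'I_n) : (a \in block n kap i) = (kap i <= a < kap i.+1)%N.
Proof. by rewrite inE. Qed.

Lemma cover s kap : consec_part n s kap -> forall m, (m <= s)%N -> forall a : 'I_n,
  (a < kap m)%N -> exists2 i : 'I_s, (i < m)%N & a \in block n kap i.
Proof.
move=> hk; elim => [|m IH] hm a la.
  by case: hk => h0 _; rewrite h0 in la.
case: (ltnP a (kap m)) => l2.
  by have [i hi ha] := IH (ltnW hm) a l2; exists i => //; apply: ltnW.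
by exists (Ordinal hm) => //=; rewrite in_block l2 la.
Qed.

Lemma EY_Hset s kap t lam y1 y2 i0 g h : consec_part n s kap -> (i0 <= s)%N ->
  @EYf s kap t lam y1 y2 g -> @EYf s kap t lam y1 y2 h -> Hset g h (kap i0).
Proof.
move=> hk hi0 /andP [/forallP Hg _] /andP [/forallP Hh _] a la.
have [i hi ha] := cover hk hi0 la.
have : g a \in h @: block n kap i by rewrite (eqP (Hh i)) -(eqP (Hg i)); apply: imset_f.
case/imsetP => a' ha' e; exists a'; last by rewrite e.
rewrite in_block in ha'; case/andP: ha' => _ ha'.
by apply: (leq_trans ha'); apply: (kap_mono hk hi hi0).
Qed.

Lemma block_lt s kap i0 (i : nat) (a : 'I_n) : consec_part n s kap -> (i0 <= s)%N -> (i < i0)%N ->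
  a \in block n kap i -> (a < kap i0)%N.
Proof.
move=> hk hi0 hi; rewrite in_block => /andP [_ h]; apply: (leq_trans h); exact: (kap_mono hk hi hi0).
Qed.

Lemma block_ge s kap i0 (i : nat) (a : 'I_n) : consec_part n s kap -> (i < s)%N -> (i0 <= i)%N ->
  a \in block n kap i -> (kap i0 <= a)%N.
Proof.
move=> hk hi hi0; rewrite in_block => /andP [h _]; apply: leq_trans h.
exact: (kap_mono hk hi0 (ltnW hi)).
Qed.

Lemma EY_mix s kap t lam y1 y2 i0 g h : consec_part n s kap -> (i0 <= s)%N ->
  @EYf s kap t lam y1 y2 g -> @EYf s kap t lam y1 y2 h -> @EYf s kap t lam y1 y2 (mix g h (kap i0)).
Proof.
move=> hk hi0 Eg Eh.
have H := EY_Hset hk hi0 Eg Eh.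
move: Eg Eh => /andP [/forallP Hg /forallP Hg'] /andP [/forallP Hh /forallP Hh'].
apply/andP; split; apply/forallP.
  move=> i; case: (ltnP i i0) => li.
    rewrite -(eqP (Hg i)); apply/eqP/eq_in_imset => a ha; apply: mix_lt => //.
    exact: (block_lt hk hi0 li).
  rewrite -(eqP (Hh i)); apply/eqP/eq_in_imset => a ha; apply: mix_ge => //.
  exact: (block_ge hk (ltn_ord i) li).
move=> j; rewrite -(eqP (Hg' j)) !imset_inv; apply/eqP/setP => a; rewrite !inE.
case: (ltnP a (kap i0)) => la; first by rewrite mix_lt.
rewrite mix_ge //.
have := Hh' j; rewrite -(eqP (Hg' j)) !imset_inv => /eqP /setP /(_ a).
by rewrite !inE => ->.
Qed.

Lemma swap_sum p (Y A B : pred {perm 'I_n}) k :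
  (forall g h, Y g -> Y h -> Hset g h k) ->
  (forall g h, Y g -> Y h -> Y (mix g h k)) ->
  (forall g h, Y g -> Y h -> p g * p h = p (mix g h k) * p (mix h g k)) ->
  (forall g h, (forall a : 'I_n, (a < k)%N -> g a = h a) -> A g = A h) ->
  (forall g h, (forall a : 'I_n, (k <= a)%N -> g a = h a) -> B g = B h) ->
  Pr p [predI [predI A & B] & Y] * Pr p Y = Pr p [predI A & Y] * Pr p [predI B & Y].
Proof.
move=> HY HYm HE hA hB.
pose Phi (u : {perm 'I_n} * {perm 'I_n}) := if Y u.1 && Y u.2 then (mix u.1 u.2 k, mix u.2 u.1 k) else u.
have mixK g h : Y g -> Y h -> mix (mix g h k) (mix h g k) k = g.
  move=> Yg Yh; apply/permP => a; case: (ltnP a k) => la.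
    rewrite (@mix_lt (mix g h k) (mix h g k) k a); last by [].
      rewrite mix_lt //; exact: HY.
    by apply: HY; apply: HYm.
  rewrite (@mix_ge (mix g h k) (mix h g k) k a); last by [].
    rewrite mix_ge //; exact: HY.
  by apply: HY; apply: HYm.
have PhiK : involutive Phi.
  move=> [g h]; rewrite /Phi /=; case: (boolP (Y g && Y h)) => [/andP [Yg Yh]|] /=.
    by rewrite !HYm // !mixK.
  by move/negbTE => ->.
rewrite !PrE big_distrlr [RHS]big_distrlr /= !pair_big.
rewrite [RHS](reindex_inj (inv_inj PhiK)) /=.
apply: eq_bigr => [[g h]] _ /=; rewrite /Phi /=.
case: (boolP (Y g && Y h)) => [/andP [Yg Yh]|nY] /=.
  rewrite !unfold_in /= !HYm // Yg Yh /= !andbT; rewrite !unfold_in.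
  rewrite (hA (mix g h k) g); last by move=> a la; rewrite mix_lt //; exact: HY.
  rewrite (hB (mix h g k) g); last by move=> a la; rewrite mix_ge //; exact: HY.
  case: (A g); case: (B g); rewrite /= ?mul0r ?mulr0 //.
  exact: HE.
rewrite !unfold_in /=; rewrite !unfold_in.
move: nY; case: (Y g); case: (Y h); rewrite /= ?andbF ?mul0r ?mulr0 //.
Qed.

Lemma row_split p s kap t lam y1 y2 (i0 : nat) (A B : pred {perm 'I_n}) :
  (forall g, 0 <= p g) -> L_decomposable p -> consec_part n s kap -> (i0 <= s)%N ->
  (forall g h, (forall a : 'I_n, (a < kap i0)%N -> g a = h a) -> A g = A h) ->
  (forall g h, (forall a : 'I_n, (kap i0 <= a)%N -> g a = h a) -> B g = B h) ->
  Pr p [predI [predI A & B] & @EYf s kap t lam y1 y2] * Pr p (@EYf s kap t lam y1 y2) =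
  Pr p [predI A & @EYf s kap t lam y1 y2] * Pr p [predI B & @EYf s kap t lam y1 y2].
Proof.
move=> p0 Ld hk hi0 hA hB; apply: (swap_sum (k := kap i0)) => //.
- by move=> g h Yg Yh; apply: (EY_Hset hk hi0 Yg Yh).
- by move=> g h Yg Yh; apply: (EY_mix hk hi0 Yg Yh).
- move=> g h Yg Yh; apply: Ek => //.
    exact: (EY_Hset hk hi0 Yg Yh).
  exact: (EY_Hset hk hi0 Yh Yg).
Qed.

Lemma Pr_pinv p (E : pred {perm 'I_n}) : Pr (pinv p) E = Pr p [pred g | E (g^-1)%g].
Proof.
rewrite /Pr /pinv [LHS](reindex_inj (@invg_inj _)) /=.
by apply: eq_bigr => g _; rewrite invgK.
Qed.

Lemma EYf_inv s kap t lam y1 y2 g :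
  @EYf s kap t lam y1 y2 (g^-1)%g = @EYf t lam s kap y2 y1 g.
Proof. by rewrite /EYf /= invgK andbC. Qed.

Lemma col_split p s kap t lam y1 y2 (j0 : nat) (A B : pred {perm 'I_n}) :
  (forall g, 0 <= p g) -> L_decomposable (pinv p) -> consec_part n t lam -> (j0 <= t)%N ->
  (forall g h, (forall v : 'I_n, (v < lam j0)%N -> (g^-1)%g v = (h^-1)%g v) -> A g = A h) ->
  (forall g h, (forall v : 'I_n, (lam j0 <= v)%N -> (g^-1)%g v = (h^-1)%g v) -> B g = B h) ->
  Pr p [predI [predI A & B] & @EYf s kap t lam y1 y2] * Pr p (@EYf s kap t lam y1 y2) =
  Pr p [predI A & @EYf s kap t lam y1 y2] * Pr p [predI B & @EYf s kap t lam y1 y2].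
Proof.
move=> p0 Ld hl hj0 hA hB.
have := @row_split (pinv p) t lam s kap y2 y1 j0 [pred g | A (g^-1)%g] [pred g | B (g^-1)%g].
rewrite !Pr_pinv => H.
have E1 : forall E F : pred {perm 'I_n}, (forall g, E (g^-1)%g = F g) ->
   Pr p [pred g | [predI E & @EYf t lam s kap y2 y1] (g^-1)%g] =
   Pr p [predI F & @EYf s kap t lam y1 y2].
  move=> E F EF; apply: Pr_ext => g /=; rewrite !unfold_in /= EF invgK.
  by congr (_ && _); rewrite andbC.
have E2 : Pr p [pred g | @EYf t lam s kap y2 y1 (g^-1)%g] = Pr p (@EYf s kap t lam y1 y2).
  by apply: Pr_ext => g; exact: EYf_inv.
have e1 : forall g, [predI [pred g | A (g^-1)%g] & [pred g | B (g^-1)%g]] (g^-1)%g = [predI A & B] g.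
  by move=> g; rewrite /= !inE /= invgK.
have e2 : forall g, [pred g | A (g^-1)%g] (g^-1)%g = A g by move=> g; rewrite /= invgK.
have e3 : forall g, [pred g | B (g^-1)%g] (g^-1)%g = B g by move=> g; rewrite /= invgK.
rewrite (E1 _ _ e1) (E1 _ _ e2) (E1 _ _ e3) E2 in H.
apply: H => //.
- by move=> g; rewrite /pinv.
- move=> g h H; rewrite /= (hA g^-1 h^-1)%g // => v lv; rewrite !invgK; exact: H.
- move=> g h H; rewrite /= (hB g^-1 h^-1)%g // => v lv; rewrite !invgK; exact: H.
Qed.

Lemma prod_ind p (Y : pred {perm 'I_n}) u (F : 'I_u -> pred {perm 'I_n}) :
  0 < Pr p Y ->
  (forall m (hm : (m < u)%N),
     Pr p [predI [predI [pred g : {perm 'I_n} | [forall i : 'I_u, (i < m)%N ==> F i g]] & F (Ordinal hm)] & Y] * Pr p Y =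
     Pr p [predI [pred g : {perm 'I_n} | [forall i : 'I_u, (i < m)%N ==> F i g]] & Y] * Pr p [predI F (Ordinal hm) & Y]) ->
  forall m, (m <= u)%N ->
  Pr p [predI [pred g : {perm 'I_n} | [forall i : 'I_u, (i < m)%N ==> F i g]] & Y] / Pr p Y =
  \prod_(i : 'I_u | (i < m)%N) (Pr p [predI F i & Y] / Pr p Y).
Proof.
move=> N0 H; elim => [|m IH] hm.
  rewrite big_pred0 // (@Pr_ext p _ Y) ?divff ?gt_eqF // => g.
  rewrite /= inE.
  by have -> : [forall i : 'I_u, true] by apply/forallP.
rewrite (bigD1 (Ordinal hm)) //=.
rewrite (eq_bigl (fun i : 'I_u => (i < m)%N)); last first.
  move=> i; apply/andP/idP => [[l ne]|l].
    rewrite ltnS leq_eqVlt in l; case/orP: l => // /eqP e.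
    by exfalso; move/negP: ne; apply; apply/eqP/val_inj.
  split; first exact: ltnW l.
  by apply/eqP => e; move: l; rewrite e /= ltnn.
rewrite -(IH (ltnW hm)).
have -> : Pr p [predI [pred g : {perm 'I_n} | [forall i : 'I_u, (i < m.+1)%N ==> F i g]] & Y] =
   Pr p [predI [predI [pred g : {perm 'I_n} | [forall i : 'I_u, (i < m)%N ==> F i g]] & F (Ordinal hm)] & Y].
  apply: Pr_ext => g; rewrite /= !inE; congr (_ && _).
  apply/forallP/andP => [Hg|[/forallP Hg Fm] i].
    split; first by apply/forallP => i; apply/implyP => li; apply: (implyP (Hg i)); apply: ltnW.
    exact: (implyP (Hg (Ordinal hm))).
  apply/implyP; rewrite ltnS leq_eqVlt => /orP [/eqP e|li]; last exact: (implyP (Hg i)).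
  by have -> : i = Ordinal hm by apply: val_inj.
have NN : Pr p Y != 0 by rewrite gt_eqF.
apply: (mulIf NN); rewrite divfK // -[RHS]mulrA divfK //.
by apply: (mulIf NN); rewrite H mulrAC divfK // mulrC.
Qed.

Lemma gb_row kap lam i j g h : (forall a, a \in block n kap i -> g a = h a) ->
  graph_block kap lam i j g = graph_block kap lam i j h.
Proof.
move=> H; apply/setP => [[a b]]; rewrite !inE /=.
case ha: (kap i <= a < kap i.+1)%N => //=; by rewrite H // in_block ha.
Qed.

Lemma gb_col kap lam i j g h : (forall v, v \in block n lam j -> (g^-1)%g v = (h^-1)%g v) ->
  graph_block kap lam i j g = graph_block kap lam i j h.
Proof.
move=> H; apply/setP => [[a b]]; rewrite !inE /=.
case: (kap i <= a < kap i.+1)%N => //=.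
case hb: (lam j <= b < lam j.+1)%N => //=.
have E (u : {perm 'I_n}) : (u a == b) = (a == (u^-1)%g b).
  by apply/eqP/eqP => [<-|->]; rewrite ?permK ?permKV.
by rewrite !E H // in_block hb.
Qed.

Lemma forward p s kap t lam : (forall g, 0 <= p g) -> L_decomposable p -> L_decomposable (pinv p) ->
  consec_part n s kap -> consec_part n t lam -> cond_indep_blocks p s kap t lam.
Proof.
move=> p0 Ld Ldi hk hl y1 y2 x EY EX N0.
have eY : EY = @EYf s kap t lam y1 y2 by [].
rewrite eY in N0 *.
set Y := @EYf s kap t lam y1 y2.
pose C (i : 'I_s) (j : 'I_t) := [pred g : {perm 'I_n} | graph_block kap lam i j g == x i j].
pose Rw (i : 'I_s) := [pred g : {perm 'I_n} | [forall j : 'I_t, (j < t)%N ==> C i j g]].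
have Rw_ext (i : 'I_s) (g h : {perm 'I_n}) : (forall a, a \in block n kap i -> g a = h a) -> Rw i g = Rw i h.
  move=> H; apply: eq_forallb => j; by rewrite /C /= (@gb_row kap lam i j g h).
have rows := @prod_ind p Y s Rw N0.
have -> : Pr p [predI EX & Y] = Pr p [predI [pred g : {perm 'I_n} | [forall i : 'I_s, (i < s)%N ==> Rw i g]] & Y].
  apply: Pr_ext => g; rewrite /= !inE; congr (_ && _).
  apply/forallP/forallP => H i; first by rewrite ltn_ord /=; apply/forallP => j; rewrite ltn_ord /=; exact: (forallP (H i) j).
  by apply/forallP => j; have := H i; rewrite ltn_ord /= => /forallP /(_ j); rewrite ltn_ord.
rewrite rows //; last first.
  move=> m hm; apply: (@row_split p s kap t lam y1 y2 m) => //; first exact: ltnW.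
    move=> g h H; apply: eq_forallb => i; case: (ltnP i m) => li //=.
    apply: Rw_ext => a ha; apply: H; exact: (block_lt hk (ltnW hm) li ha).
  move=> g h H; apply: Rw_ext => a ha; apply: H; exact: (block_ge hk hm (leqnn m) ha).
rewrite (eq_bigl xpredT); last by move=> i; rewrite ltn_ord.
apply: eq_bigr => i _.
have cols := @prod_ind p Y t (C i) N0.
rewrite cols //; last first.
  move=> m hm; apply: (@col_split p s kap t lam y1 y2 m) => //; first exact: ltnW.
    move=> g h H; apply: eq_forallb => j; case: (ltnP j m) => lj //=.
    by rewrite /C /= (@gb_col kap lam i j g h) // => v hv; apply: H; apply: (block_lt hl (ltnW hm) lj hv).
  move=> g h H; rewrite /C /= (@gb_col kap lam i (Ordinal hm) g h) // => v hv; apply: H; exact: (block_ge hl hm (leqnn m) hv).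
by rewrite (eq_bigl xpredT) // => j; rewrite ltn_ord.
Qed.

Lemma back_abs p (Y A B : pred {perm 'I_n}) (X0 X1 : {perm 'I_n} -> {set 'I_n * 'I_n}) x0
  (T1 : pred {set 'I_n * 'I_n}) :
  (forall g, 0 <= p g) ->
  (forall x1, 0 < Pr p Y ->
     Pr p [pred g | (X0 g == x0) && (X1 g == x1) && Y g] / Pr p Y =
     (Pr p [pred g | (X0 g == x0) && Y g] / Pr p Y) * (Pr p [pred g | (X1 g == x1) && Y g] / Pr p Y)) ->
  B =1 [pred g | (X0 g == x0) && Y g] ->
  (forall g, Y g -> A g = T1 (X1 g)) ->
  0 < Pr p B -> Pr p [predI A & B] / Pr p B = Pr p [predI A & Y] / Pr p Y.
Proof.
move=> p0 H hB hA PB.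
have PY : 0 < Pr p Y.
  apply: (lt_le_trans PB); apply: Pr_sub => // g; rewrite hB /=; by case/andP.
have NN : Pr p Y != 0 by rewrite gt_eqF.
have BN : Pr p B != 0 by rewrite gt_eqF.
have part (E : pred {perm 'I_n}) : Pr p [pred g | E g && T1 (X1 g)] =
    \sum_(x | T1 x) Pr p [pred g | E g && (X1 g == x)].
  rewrite /Pr (partition_big X1 T1); last by move=> g /andP [].
  apply: eq_bigr => x Tx; apply: eq_bigl => g /=.
  case e: (X1 g == x); last by rewrite !andbF.
  by rewrite (eqP e) Tx !andbT.
have e1 : Pr p [predI A & B] = Pr p [pred g | ((X0 g == x0) && Y g) && T1 (X1 g)].
  apply: Pr_ext => g; rewrite /= ?unfold_in /= ?unfold_in /= hB /=.
  case Yg: (Y g); last by rewrite !andbF.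
  by rewrite hA // andbT andbC.
have e2 : Pr p [predI A & Y] = Pr p [pred g | Y g && T1 (X1 g)].
  apply: Pr_ext => g; rewrite /= ?unfold_in /= ?unfold_in /=.
  by case Yg: (Y g); rewrite ?andbF // hA // andbT.
have e3 x : Pr p [pred g | ((X0 g == x0) && Y g) && (X1 g == x)] =
    Pr p B / Pr p Y * Pr p [pred g | Y g && (X1 g == x)].
  have h := H x PY.
  rewrite (@Pr_ext p [pred g | (X0 g == x0) && (X1 g == x) && Y g]
     [pred g | ((X0 g == x0) && Y g) && (X1 g == x)]) in h; last first.
    by move=> g /=; case: (X0 g == x0); case: (X1 g == x); case: (Y g).
  rewrite (@Pr_ext p [pred g | (X0 g == x0) && Y g] B) in h; last by move=> g; rewrite hB.
  rewrite (@Pr_ext p [pred g | (X1 g == x) && Y g] [pred g | Y g && (X1 g == x)]) in h; last first.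
    by move=> g /=; rewrite andbC.
  move/(congr1 (fun z => z * Pr p Y)): h; rewrite /= divfK // => ->.
  by rewrite -mulrA divfK.
rewrite e1 e2 !part (eq_bigr _ (fun x _ => e3 x)) -mulr_sumr.
apply: (mulIf BN); rewrite divfK //.
by rewrite mulrAC [RHS]mulrAC (mulrC (Pr p B)).
Qed.

Lemma imsetC_perm g (S : {set 'I_n}) : g @: (~: S) = ~: (g @: S).
Proof. by rewrite -(preim_permV g (~: S)) -(preim_permV g S) preimsetC. Qed.

Lemma imsetT_perm g : g @: [set: 'I_n] = [set: 'I_n].
Proof. by rewrite -(preim_permV g setT) preimsetT. Qed.

Definition EXf s (kap : nat -> nat) t (lam : nat -> nat) (x : 'I_s -> 'I_t -> {set 'I_n * 'I_n}) : simpl_pred {perm 'I_n} :=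
  [pred g : {perm 'I_n} | [forall i : 'I_s, forall j : 'I_t, graph_block kap lam i j g == x i j]].
Definition Cf (kap lam : nat -> nat) (i j : nat) (xij : {set 'I_n * 'I_n}) : simpl_pred {perm 'I_n} :=
  [pred g : {perm 'I_n} | graph_block kap lam i j g == xij].

Lemma cond_indepE p s kap t lam : cond_indep_blocks p s kap t lam ->
  forall y1 y2 x, 0 < Pr p (@EYf s kap t lam y1 y2) ->
  Pr p [predI @EXf s kap t lam x & @EYf s kap t lam y1 y2] / Pr p (@EYf s kap t lam y1 y2) =
  \prod_(i : 'I_s) \prod_(j : 'I_t)
     (Pr p [predI Cf kap lam i j (x i j) & @EYf s kap t lam y1 y2] / Pr p (@EYf s kap t lam y1 y2)).
Proof. by move=> H y1 y2 x; apply: H. Qed.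

Lemma prod21 (F : 'I_2 -> 'I_1 -> R) :
  \prod_(i : 'I_2) \prod_(j : 'I_1) F i j = F ord0 ord0 * F (@Ordinal 2 1 isT) ord0.
Proof.
rewrite !big_ord_recl !big_ord0 !mulr1; congr (_ * F _ _); exact: val_inj.
Qed.

Lemma PrI_ext p (E Y1 Y2 : pred {perm 'I_n}) : Y1 =1 Y2 -> Pr p [predI E & Y1] = Pr p [predI E & Y2].
Proof. by move=> H; apply: Pr_ext => g; rewrite /= ?unfold_in /= ?unfold_in /= H. Qed.

Lemma backward_L p : (forall g, 0 <= p g) ->
  (forall s kap t lam, consec_part n s kap -> consec_part n t lam -> cond_indep_blocks p s kap t lam) ->
  L_decomposable p.
Proof.
move=> p0 HC k pi h2 h3 A B C PB.
pose kap := fun i : nat => if i == 0%N then 0%N else if i == 1%N then (k : nat) else n.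
pose lam := fun i : nat => if i == 0%N then 0%N else n.
have n0 : (0 < n)%N by apply: leq_ltn_trans (ltn_ord k).
have hk : consec_part n 2 kap.
  split; first by []. split; first by [].
  move=> [[|[|m]] hi] //=; [exact: ltn_trans h2 | exact: ltn_ord].
have hl : consec_part n 1 lam.
  split; first by []. split; first by [].
  by move=> [[|m] hi] //=.
have HCI := cond_indepE (HC 2%N kap 1%N lam hk hl).
set S := [set pi a | a : 'I_n & (a < k)%N].
pose y1 (i : 'I_2) := if i == ord0 then S else ~: S.
pose y2 (j : 'I_1) := [set: 'I_n].
pose X0 := @graph_block n kap lam 0 0.
pose X1 := @graph_block n kap lam 1 0.
pose x0 := X0 pi.
have blk0 : block n kap 0 = [set a : 'I_n | (a < k)%N] by apply/setP => a; rewrite !inE.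
have blk1 : block n kap 1 = ~: [set a : 'I_n | (a < k)%N].
  by apply/setP => a; rewrite !inE /= -leqNgt (ltn_ord a) andbT.
have blkl : block n lam 0 = [set: 'I_n] by apply/setP => a; rewrite !inE /= ltn_ord.
have EYC : @EYf 2 kap 1 lam y1 y2 =1 C.
  move=> g; rewrite /EYf /= /C /=.
  have -> : [forall j : 'I_1, (g^-1)%g @: block n lam j == y2 j].
    by apply/forallP => -[[|m] hm] //=; rewrite blkl imsetT_perm.
  rewrite andbT; apply/forallP/idP => [H|/eqP H].
    by have := H ord0; rewrite /= blk0.
  by move=> [[|[|m]] hm] //=; rewrite ?blk0 ?blk1 ?imsetC_perm H.
pose A' : pred {perm 'I_n} := A. pose B' : pred {perm 'I_n} := B. pose C' : pred {perm 'I_n} := C.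
have -> : Pr p [predI A & B] = Pr p [predI A' & B'] by apply: Pr_ext.
have -> : Pr p [predI A & C] = Pr p [predI A' & C'] by apply: Pr_ext.
apply: (@back_abs p C' A' B' X0 X1 x0 (fun z : {set 'I_n * 'I_n} => (k, pi k) \in z)) => //.
- move=> x1 PC.
  pose xx (i : 'I_2) (j : 'I_1) := if i == ord0 then x0 else x1.
  have H := HCI y1 y2 xx.
  rewrite prod21 !(@PrI_ext p _ _ _ EYC) (@Pr_ext p _ _ EYC) in H.
  have {H} H := H PC.
  have e1 : Pr p [pred g | (X0 g == x0) && (X1 g == x1) & C' g] = Pr p [predI EXf kap lam xx & C].
    apply: Pr_ext => g; rewrite /= ?unfold_in /= ?unfold_in /=; congr (_ && _).
    apply/andP/forallP => [[e0 e1] i| H'].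
      by apply/forallP => j; case: i => [[|[|m]] hm] //; case: j => [[|m'] hm'] //=.
    split.
      by have := forallP (H' ord0) ord0; rewrite /xx /=.
    by have := forallP (H' (Ordinal (isT : (1 < 2)%N))) ord0; rewrite /xx /=.
  have e2 : Pr p [pred g | X0 g == x0 & C' g] = Pr p [predI Cf kap lam 0 0 x0 & C].
    by apply: Pr_ext => g; rewrite /= ?unfold_in /= ?unfold_in.
  have e3 : Pr p [pred g | X1 g == x1 & C' g] = Pr p [predI Cf kap lam 1 0 x1 & C].
    by apply: Pr_ext => g; rewrite /= ?unfold_in /= ?unfold_in.
  by rewrite e1 e2 e3; exact: H.
- move=> g; rewrite /B' /B /C' /C /=.
  apply/forallP/andP => [H|[/eqP e Cg] a].
    split.
      apply/eqP; apply: gb_row => a; rewrite in_block /kap /= => la.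
      by apply/eqP; apply: (implyP (H a)).
    apply/eqP; apply: eq_in_imset => a; rewrite inE => la.
    by apply/eqP; apply: (implyP (H a)).
  apply/implyP => la.
  have : (a, g a) \in X0 g by rewrite !inE /= /kap /lam /= la ltn_ord eqxx.
  by rewrite e /x0 !inE /= => /and3P [_ _ /eqP ->].
- move=> g _; rewrite /A' /A /= !inE /= /kap /lam /= leqnn ltn_ord /=; by rewrite ltn_ord.
Qed.

Definition sw (X : {set 'I_n * 'I_n}) : {set 'I_n * 'I_n} := [set z | (z.2, z.1) \in X].

Lemma sw_eq (A B : {set 'I_n * 'I_n}) : (sw A == B) = (A == sw B).
Proof.
apply/eqP/eqP => [<-|->]; apply/setP => -[a b]; by rewrite !inE /=.
Qed.

Lemma gb_inv kap lam i j g :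
  graph_block lam kap j i (g^-1)%g = sw (graph_block kap lam i j g).
Proof.
apply/setP => -[a b]; rewrite !inE /=.
have -> : ((g^-1)%g a == b) = (g b == a).
  by apply/eqP/eqP => [<-|<-]; rewrite ?permKV ?permK.
by rewrite andbCA.
Qed.

Lemma cond_indep_pinv p s kap t lam :
  cond_indep_blocks p s kap t lam -> cond_indep_blocks (pinv p) t lam s kap.
Proof.
move=> H y1 y2 x EY EX.
have eY : Pr (pinv p) EY = Pr p (@EYf s kap t lam y2 y1).
  by rewrite Pr_pinv; apply: Pr_ext => g; exact: EYf_inv.
have eYI (E F : pred {perm 'I_n}) : (forall g, E (g^-1)%g = F g) ->
    Pr (pinv p) [predI E & EY] = Pr p [predI F & @EYf s kap t lam y2 y1].
  move=> EF; rewrite Pr_pinv; apply: Pr_ext => g; rewrite /= ?unfold_in /= ?unfold_in /= -EF.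
  congr (_ && _); exact: EYf_inv.
move=> N0.
have N1 : 0 < Pr p (@EYf s kap t lam y2 y1) by rewrite -eY.
rewrite [Pr (pinv p) EY]eY.
rewrite (eYI _ (@EXf s kap t lam (fun i j => sw (x j i)))); last first.
  move=> g; rewrite /=.
  apply/forallP/forallP => [Hg i|Hg j].
    apply/forallP => j; have := forallP (Hg j) i; by rewrite gb_inv sw_eq.
  apply/forallP => i; have := forallP (Hg i) j; by rewrite gb_inv sw_eq.
rewrite (cond_indepE H) // [LHS]exchange_big /=.
apply: eq_bigr => j _; apply: eq_bigr => i _.
rewrite (eYI _ (Cf kap lam i j (sw (x j i)))) // => g.
by rewrite /= gb_inv sw_eq.
Qed.

End S.

Unset Implicit Arguments.

Theorem proposition3 (R : realFieldType) (n : nat) (p : {perm 'I_n} -> R)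
  (hp : is_distr p) :
  bi_decomposable p <->
  (forall (s : nat) (kap : nat -> nat) (t : nat) (lam : nat -> nat),
     consec_part n s kap -> consec_part n t lam ->
     cond_indep_blocks p s kap t lam).
Proof.
have p0 : forall g, 0 <= p g by case: hp.
split.
- move=> [Ld Ldi] s kap t lam hk hl; exact: forward.
- move=> HC; split.
    exact: backward_L p0 HC.
  apply: backward_L; first by move=> g; exact: p0.
  move=> s kap t lam hk hl; apply: cond_indep_pinv; exact: HC.
Qed.
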